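(* Neither the class of all weakly connected frames nor the class of all transitive and weakly connected frames is spi-definable.
   Context: Unimodal setting: frames $(W,R)$ with one binary relation; sp-formulas built from propositional variables and $\top$ by $\wedge$ and $\Diamond$; sp-implications $\sigma\to\tau$, valid in a frame if at every point of every Kripke model over it $\sigma$ true implies $\tau$ true. A class $\mathcal C$ of frames is spi-definable if there is a set $\Sigma$ of sp-implications such that $\mathcal C$ is exactly the class of frames validating every member of $\Sigma$. $R$ is weakly connected if $\forall x,y,z\,(R(x,y)\wedge R(x,z)\to R(y,z)\vee R(z,y)\vee y=z)$. *)

(* Defs.v *)
Record frame := Frame { world : Type; acc : world -> world -> Prop }.

Inductive spform : Type :=
| SVar : nat -> spform
| STop : spform
| SAnd : spform -> spform -> spform
| SDia : spform -> spform.

Record spimpl := SPImpl { ante : spform; cons : spform }.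

Fixpoint sat (F : frame) (V : nat -> world F -> Prop) (x : world F) (s : spform) : Prop :=
  match s with
  | SVar p => V p x
  | STop => True
  | SAnd a b => sat F V x a /\ sat F V x b
  | SDia a => exists y, acc F x y /\ sat F V y a
  end.

Definition valid_in (F : frame) (i : spimpl) : Prop :=
  forall (V : nat -> world F -> Prop) (x : world F), sat F V x (ante i) -> sat F V x (cons i).

Definition spi_definable (C : frame -> Prop) : Prop :=
  exists Sigma : spimpl -> Prop,
    forall F : frame, C F <-> (forall i, Sigma i -> valid_in F i).

Definition transitive_frame (F : frame) : Prop :=
  forall x y z : world F, acc F x y -> acc F y z -> acc F x z.

Definition weakly_connected (F : frame) : Prop :=
  forall x y z : world F, acc F x y -> acc F x z ->
    acc F y z \/ acc F z y \/ y = z.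

(* Main.v *)
Require Import Defs.

Inductive W3 := X | Y | Z.

Definition r0 (a b : W3) : Prop :=
  match a, b with X, Y => True | X, Z => True | _, _ => False end.
Definition r1 (a b : W3) : Prop :=
  match a, b with X, Y => True | X, Z => True | Y, Z => True | _, _ => False end.
Definition r2 (a b : W3) : Prop :=
  match a, b with X, Y => True | X, Z => True | Z, Y => True | _, _ => False end.
Definition r3 (a b : W3) : Prop :=
  match a, b with X, Y => True | _, _ => False end.

Definition G0 := Frame W3 r0.
Definition F1 := Frame W3 r1.
Definition F2 := Frame W3 r2.
Definition F3 := Frame W3 r3.

Lemma sat_hom (F G : frame) (f : world F -> world G) V V' :
  (forall a b, acc F a b -> acc G (f a) (f b)) ->
  (forall p w, V p w -> V' p (f w)) ->
  forall s w, sat F V w s -> sat G V' (f w) s.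
Proof.
  intros Hacc HV s; induction s; simpl; intros w H.
  - apply HV; exact H.
  - exact I.
  - destruct H; split; auto.
  - destruct H as [y [Hy Hs]]. exists (f y). split; auto.
Qed.

Lemma dead_back (F G : frame) (w : world F) (w' : world G) V V' :
  (forall y, ~ acc F w y) -> (forall p, V p w -> V' p w') ->
  forall s, sat F V w s -> sat G V' w' s.
Proof.
  intros Hd HV s; induction s; simpl; intros H.
  - apply HV; exact H.
  - exact I.
  - destruct H; split; auto.
  - destruct H as [y [Hy _]]. exfalso; exact (Hd y Hy).
Qed.

Definition ftop (p : nat) (w : W3) : Prop := True.

Definition collapse (w : W3) : W3 := match w with X => X | _ => Y end.

Lemma flat (V : nat -> W3 -> Prop) : forall a w,
  sat F3 ftop Y a -> sat F1 V w a -> sat G0 V w a.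
Proof.
  induction a; simpl; intros w H3 H1.
  - exact H1.
  - exact I.
  - destruct H3, H1; split; eauto.
  - destruct H3 as [y [Hy _]]. destruct y; simpl in Hy; contradiction.
Qed.

Lemma key (C : frame -> Prop) :
  C F1 -> C F2 -> C F3 -> ~ C G0 -> ~ spi_definable C.
Proof.
  intros H1 H2 H3 H0 [Sigma HS].
  apply H0. apply (proj2 (HS G0)).
  intros i Hi V x Hx.
  destruct x.
  -
    assert (A1 : sat F1 V X (ante i)).
    { apply (sat_hom G0 F1 (fun w => w) V V); auto.
      intros a b; destruct a, b; simpl; tauto. }
    assert (A3 : sat F3 ftop X (ante i)).
    { apply (sat_hom G0 F3 collapse V ftop) with (w := X).
      - intros a b; destruct a, b; simpl; tauto.
      - intros; exact I.
      - exact Hx. }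
    pose proof (proj1 (HS F1) H1 i Hi V X A1) as C1.
    pose proof (proj1 (HS F3) H3 i Hi ftop X A3) as C3.
    clear A1 A3 Hx. revert C1 C3. generalize (cons i) as s.
    induction s; simpl; intros C1 C3.
    + exact C1.
    + exact I.
    + destruct C1, C3; split; auto.
    + destruct C1 as [w [Hw Hs]]. destruct C3 as [y [Hy Hy3]].
      destruct y; simpl in Hy; try contradiction.
      exists w. split.
      * destruct w; simpl in *; tauto.
      * apply (flat V s w Hy3 Hs).
  -
    assert (A : sat F2 V Y (ante i)).
    { apply (dead_back G0 F2 Y Y V V); try (intros y; destruct y; simpl; tauto); auto. }
    pose proof (proj1 (HS F2) H2 i Hi V Y A) as C2.
    apply (dead_back F2 G0 Y Y V V); try (intros y; destruct y; simpl; tauto); auto.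
  -
    assert (A : sat F1 V Z (ante i)).
    { apply (dead_back G0 F1 Z Z V V); try (intros y; destruct y; simpl; tauto); auto. }
    pose proof (proj1 (HS F1) H1 i Hi V Z A) as C2.
    apply (dead_back F1 G0 Z Z V V); try (intros y; destruct y; simpl; tauto); auto.
Qed.

Ltac frame_tac :=
  unfold transitive_frame, weakly_connected; simpl;
  intros x y z; destruct x, y, z; simpl; intros;
  try contradiction; try tauto; try (right; right; reflexivity).

Lemma wc1 : weakly_connected F1. Proof. frame_tac. Qed.
Lemma wc2 : weakly_connected F2. Proof. frame_tac. Qed.
Lemma wc3 : weakly_connected F3. Proof. frame_tac. Qed.
Lemma tr1 : transitive_frame F1. Proof. frame_tac. Qed.
Lemma tr2 : transitive_frame F2. Proof. frame_tac. Qed.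
Lemma tr3 : transitive_frame F3. Proof. frame_tac. Qed.

Lemma nwc0 : ~ weakly_connected G0.
Proof.
  intros H. destruct (H X Y Z I I) as [h | [h | h]]; simpl in h; try contradiction.
  discriminate.
Qed.

Theorem proposition9p4 :
  ~ spi_definable weakly_connected /\
  ~ spi_definable (fun F => transitive_frame F /\ weakly_connected F).
Proof.
  split.
  - apply key; auto using wc1, wc2, wc3, nwc0.
  - apply key; try (split; auto using wc1, wc2, wc3, tr1, tr2, tr3).
    intros [_ H]. exact (nwc0 H).
Qed.
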